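(* Let $X$ and $Y$ be real random variables with probability densities $p_X$ and $p_Y$ (with respect to Lebesgue measure on $\mathbb{R}$), and suppose there is a constant $D<\infty$ with $0<p_Y(y)\le D$ for all $y\in\mathbb{R}$. Then for every $A>0$ (writing $\mathcal{A}=[-A,A]$) and every $s>1$, \[ \begin{aligned} \mathrm{KL}(X\|Y)\le\;& (1+|\ln D|)\big[\mathbb{P}(|Y|\ge A)+\|p_X-p_Y\|_1\big]\\ &+\big(\mathbb{E}_X|\ln p_Y(X)|^s\big)^{1/s}\big[\mathbb{P}(|Y|\ge A)+\|p_X-p_Y\|_1\big]^{1-1/s}\\ &+\Big(1+\max_{y\in\mathcal{A}}p_Y(y)^{-1}\Big)\|p_X-p_Y\|_2^2 . \end{aligned} \]
   Context: $\mathrm{KL}(X\|Y)=\int_{\mathbb{R}} p_X(x)\ln\frac{p_X(x)}{p_Y(x)}\,dx$ is the Kullback–Leibler divergence between the laws of $X$ and $Y$. $\|f\|_q$ denotes the $L^q(\mathbb{R})$ norm with respect to Lebesgue measure. $\mathbb{E}_X|\ln p_Y(X)|^s=\int p_X(x)|\ln p_Y(x)|^s\,dx$. *)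

(* Defs.v *)
From HB Require Import structures.
From mathcomp Require Import all_boot all_order all_algebra.
From mathcomp Require Import all_classical all_reals all_analysis.
Set Implicit Arguments. Unset Strict Implicit. Unset Printing Implicit Defensive.
Import Order.TTheory GRing.Theory Num.Theory.
Local Open Scope classical_set_scope.
Local Open Scope ring_scope.

Section Defs.
Variable R : realType.
Local Notation mu := (@lebesgue_measure R).

Definition is_density (p : R -> R) : Prop :=
  measurable_fun setT p /\ (forall x, 0 <= p x) /\
  (\int[mu]_x (p x)%:E = 1)%E.

Definition KL (pX pY : R -> R) : \bar R :=
  (\int[mu]_x (if pX x == 0 then 0 else pX x * ln (pX x / pY x))%:E)%E.

Definition L1norm (f : R -> R) : \bar R := (\int[mu]_x (`|f x|)%:E)%E.
Definition L2norm_sq (f : R -> R) : \bar R := (\int[mu]_x (`|f x| ^+ 2)%:E)%E.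

Definition E_abs_ln_pow (pX pY : R -> R) (s : R) : \bar R :=
  (\int[mu]_x (pX x * (`|ln (pY x)| `^ s))%:E)%E.

Definition prob_abs_ge (pY : R -> R) (A : R) : \bar R :=
  (\int[mu]_(x in [set x : R | (A <= `|x|)%R]) (pY x)%:E)%E.

(* max_{y in [-A,A]} p_Y(y)^{-1}, read as a supremum *)
Definition sup_inv_on (pY : R -> R) (A : R) : \bar R :=
  ereal_sup [set ((pY y)^-1)%:E | y in `[- A, A]].
End Defs.

(* Main.v *)
Require Import Defs.
From HB Require Import structures.
From mathcomp Require Import all_boot all_order all_algebra.
From mathcomp Require Import all_classical all_reals all_analysis.
From mathcomp Require Import ring lra measurable_realfun.
Import Order.TTheory GRing.Theory Num.Theory.
Local Open Scope classical_set_scope.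
Local Open Scope ring_scope.
Section RealLemmas.
Variable R : realType.

Lemma ln_le_sub1 (x : R) : 0 < x -> ln x <= x - 1.
Proof.
move=> x0; have := @le_ln1Dx R (x - 1).
rewrite addrCA subrr addr0; apply; lra.
Qed.

Lemma ln2_le1 : ln (2 : R) <= 1.
Proof. have := @ln_le_sub1 2; rewrite ltr0n => /(_ isT); lra. Qed.

Lemma ln_bound (f : R) : 0 < f -> ln f <= 1 + f / 4.
Proof.
move=> f0.
have h := @ln_le_sub1 (f / 4); rewrite divr_gt0 ?ltr0n// in h.
have {}h := h isT.
rewrite -[in ln f](_ : 2 * 2 * (f / 4) = f); last by field.
rewrite lnM ?posrE ?mulr_gt0 ?divr_gt0 ?ltr0n//.
rewrite lnM ?posrE ?ltr0n//.
have := ln2_le1.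
lra.
Qed.

Lemma ln_div (f g : R) : 0 < f -> 0 < g -> ln (f / g) = ln f - ln g.
Proof. by move=> f0 g0; rewrite lnM ?posrE ?invr_gt0// lnV ?posrE. Qed.

Lemma key_in (f g : R) : 0 <= f -> 0 < g ->
  f * ln (f / g) <= (f - g) ^+ 2 / g + (f - g).
Proof.
move=> f0 g0; have [->|fp] := eqVneq f 0.
  rewrite mul0r sub0r sqrrN expr2 mulrK ?unitfE ?gt_eqF//; lra.
have fg : 0 < f / g by rewrite divr_gt0// lt0r fp.
have h := @ln_le_sub1 _ fg.
have := ler_wpM2l f0 h => /le_trans; apply.
rewrite le_eqVlt; apply/orP; left; apply/eqP; field; exact: lt0r_neq0.
Qed.

Lemma key_out (f g D : R) : 0 <= f -> 0 < g -> g <= D ->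
  f * ln (f / g) <= (1 + `|ln D|) * (g + `|f - g|) + f * `|ln g| + (f - g) ^+ 2.
Proof.
move=> f0 g0 gD.
have c1 : 1 <= 1 + `|ln D| by rewrite lerDl.
have sq0 : 0 <= (f - g) ^+ 2 by rewrite sqr_ge0.
have ad0 : 0 <= `|f - g| by [].
have lg0 : 0 <= `|ln g| by [].
have [->|fp] := eqVneq f 0.
  rewrite mul0r !mul0r addr0; apply: addr_ge0 => //.
  - apply: mulr_ge0; [lra|apply: addr_ge0 => //; exact: ltW].
  - exact: sqr_ge0.
have fpos : 0 < f by rewrite lt0r fp.
rewrite ln_div // mulrBr.
have h1 : - (f * ln g) <= f * `|ln g|.
  by rewrite -mulrN ler_wpM2l // -normrN ler_norm.
suff h2 : f * ln f <= (1 + `|ln D|) * (g + `|f - g|) + (f - g) ^+ 2 by lra.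
have fle : f <= g + `|f - g|.
  by have := ler_norm (f - g); lra.
have [f2D|f2D] := lerP f (2 * D).
  have lnf : ln f <= 1 + `|ln D|.
    have D0 : 0 < D by apply: lt_le_trans gD.
    rewrite (le_trans (_ : ln f <= ln (2 * D))) //.
      by rewrite ler_ln // posrE; lra.
    rewrite lnM ?posrE ?ltr0n //.
    have := ln2_le1; have := ler_norm (ln D); lra.
  apply: le_trans (_ : (1 + `|ln D|) * f <= _).
    by rewrite mulrC ler_wpM2r // ltW.
  have c0 : 0 <= 1 + `|ln D| by lra.
  have := ler_wpM2l c0 fle; lra.
have hb := @ln_bound _ fpos.
have : f * ln f <= f * (1 + f / 4) by rewrite ler_wpM2l // ltW.
have dpos : f <= 2 * (f - g) by lra.
have : f ^+ 2 / 4 <= (f - g) ^+ 2.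
  have e : f ^+ 2 / 4 = (f / 2) ^+ 2 by field.
  rewrite e !expr2; nra.
have : f <= (1 + `|ln D|) * (g + `|f - g|).
  have gd0 : 0 <= g + `|f - g| by lra.
  have := ler_wpM2r gd0 c1; rewrite mul1r; lra.
have -> : f * (1 + f / 4) = f + f ^+ 2 / 4 by rewrite expr2; field.
lra.
Qed.

End RealLemmas.

Ltac leaf := first [ done | apply: sqr_ge0
  | match goal with H : forall y, (0 <= _ y)%R |- _ => apply: H end ].
Ltac nng := move=> ? _; repeat first [ apply: adde_ge0 | apply: mule_ge0
  | (apply: erestrict_ge0 => ? _) | (rewrite lee_fin) ]; rewrite /=; leaf.
Ltac mm := repeat first [ apply: emeasurable_funD | apply: measurable_funeM
  | match goal with H : forall S F, _ -> _ -> measurable_fun _ ((EFin \o F) \_ S) |- _ => apply: H end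
  | match goal with H : forall F, _ -> measurable_fun _ (EFin \o F) |- _ => apply: H end ]; done.

Theorem theorem2p1 (R : realType) (pX pY : R -> R) (D : R)
  (hX : is_density pX) (hY : is_density pY)
  (hpos : forall y, 0 < pY y) (hD : forall y, pY y <= D)
  (A s : R) (hA : 0 < A) (hs : 1 < s) :
  (KL pX pY <=
     (1 + `|ln D|)%:E * (prob_abs_ge pY A + L1norm (fun x => (pX x - pY x)%R))
   + poweR (E_abs_ln_pow pX pY s) (s^-1)%R
     * poweR (prob_abs_ge pY A + L1norm (fun x => (pX x - pY x)%R)) (1 - s^-1)
   + (1%:E + sup_inv_on pY A) * L2norm_sq (fun x => (pX x - pY x)%R))%E.
Proof.
case: hX => mf [f0 _]; case: hY => mg [g0 _].
set c := 1 + `|ln D|.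
have c0 : 0 <= c by rewrite /c; apply: addr_ge0.
set I : set R := `[- A, A]%classic.
set O : set R := ~` I.
have mI : measurable I by exact: measurable_itv.
have mO : measurable O by exact: measurableC.
have mginv : measurable_fun setT (fun x => (pY x)^-1).
  rewrite (_ : (fun x => _) = (fun x => expR ((-1) * ln (pY x)))).
    apply: measurableT_comp; first exact: measurable_realfun.measurable_expR.
    apply: measurable_funM; first exact: measurable_cst.
    by apply: measurableT_comp; first exact: measurable_ln.
  by apply/funext => x; rewrite mulN1r expRN lnK // posrE.
have md : measurable_fun setT (fun x => pX x - pY x) by exact: measurable_funB.
set k := fun x => pX x * ln (pX x / pY x).
have mk : measurable_fun setT k.
  apply: measurable_funM => //; apply: measurableT_comp; first exact: measurable_ln.
  exact: measurable_funM.
have KLe : KL pX pY = (\int[lebesgue_measure]_x (k x)%:E)%E.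
  rewrite /KL; apply: eq_integral => x _.
  by case: ifPn => [/eqP e|_]; rewrite /k ?e ?mul0r.
set d := fun x => pX x - pY x.
set h1 := fun x => pX x * `|ln (pY x)|.
set h2 := fun x => d x ^+ 2 / pY x.
set B := fun x => (c%:E * (((EFin \o pY) \_ O) x + (`|d x|)%:E)
   + ((EFin \o h1) \_ O) x + ((d x) ^+ 2)%:E + ((EFin \o h2) \_ I) x)%E.
have pt : (point : \bar R) = 0%E by [].
have inO x : (x \in O) = (x \notin I) by rewrite /O in_setC.
have kB x : ((k x)%:E <= B x)%E.
  rewrite /B !patchE inO.
  case: (boolP (x \in I)) => xI /=; rewrite ?pt.
    rewrite add0e adde0 -EFinM -!EFinD lee_fin /h2 /d /k.
    have := @key_in R _ _ (f0 x) (hpos x).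
    have := ler_norm (pX x - pY x).
    have : `|pX x - pY x| <= c * `|pX x - pY x|.
      by rewrite ler_peMl // /c lerDl.
    have := sqr_ge0 (pX x - pY x). lra.
  rewrite adde0 -EFinM -!EFinD lee_fin /h1 /d /k.
  exact: key_out.
have B0 x : (0 <= B x)%E.
  rewrite /B !patchE inO; case: (boolP (x \in I)) => xI /=; rewrite ?pt;
    rewrite ?add0e ?adde0 -?EFinM -!EFinD lee_fin.
    have := sqr_ge0 (d x).
    have : 0 <= h2 x by rewrite /h2 divr_ge0 ?sqr_ge0 // ltW.
    have : 0 <= c * `|d x| by rewrite mulr_ge0.
    lra.
  have : 0 <= h1 x by rewrite /h1 mulr_ge0.
  have : 0 <= c * (pY x + `|d x|) by rewrite mulr_ge0 // addr_ge0.
  have := sqr_ge0 (d x).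
  lra.
have mE (F : R -> R) : measurable_fun setT F -> measurable_fun setT (EFin \o F).
  by move=> mF; apply/measurable_EFinP.
have mR (S : set R) (F : R -> R) : measurable S -> measurable_fun setT F ->
    measurable_fun setT ((EFin \o F) \_ S).
  move=> mS mF; apply/(measurable_restrictT _ mS); apply: measurable_funTS.
  exact/measurable_EFinP.
have mad : measurable_fun setT (fun x => `|d x|).
  by apply: measurableT_comp md; exact: normr_measurable.
have md2 : measurable_fun setT (fun x => d x ^+ 2) by exact: measurable_funX.
have mlng : measurable_fun setT (fun x => ln (pY x)).
  by apply: measurableT_comp mg; exact: measurable_ln.
have mh1 : measurable_fun setT h1.
  apply: measurable_funM => //.
  by apply: measurableT_comp mlng; exact: normr_measurable.
have mh2 : measurable_fun setT h2 by exact: measurable_funM.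
have mB : measurable_fun setT B.
  rewrite /B; apply: emeasurable_funD; last exact: mR.
  apply: emeasurable_funD; last exact: mE.
  apply: emeasurable_funD; last exact: mR.
  apply: measurable_funeM; apply: emeasurable_funD; first exact: mR.
  exact: mE.
have step1 : (KL pX pY <= \int[lebesgue_measure]_x B x)%E.
  rewrite KLe integralE.
  apply: (@le_trans _ _ (\int[lebesgue_measure]_x ((EFin \o k)^\+ x))%E).
    rewrite -[X in (_ <= X)%E]sube0; apply: leeB => //.
    by apply: integral_ge0 => x _; exact: funeneg_ge0.
  apply: ge0_le_integral => //.
  - by apply: measurable_funepos; exact: mE.
  - by move=> x _; rewrite funeposE ge_max kB B0.
have pp (S : set R) (F : R -> R) : (forall x, 0 <= F x) ->
    forall x, [set: R] x -> (0 <= ((EFin \o F) \_ S) x)%E.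
  by move=> hF x _; apply: erestrict_ge0 => y _; rewrite /= lee_fin.
have h1ge0 x : 0 <= h1 x by rewrite /h1 mulr_ge0.
have h2ge0 x : 0 <= h2 x by rewrite /h2 divr_ge0 ?sqr_ge0 // ltW.
have eB : (\int[lebesgue_measure]_x B x =
    c%:E * (\int[lebesgue_measure]_(x in O) (pY x)%:E
            + \int[lebesgue_measure]_x (`|d x|)%:E)
    + \int[lebesgue_measure]_(x in O) (h1 x)%:E
    + \int[lebesgue_measure]_x ((d x) ^+ 2)%:E
    + \int[lebesgue_measure]_(x in I) (h2 x)%:E)%E.
  rewrite /B ge0_integralD //; try solve [nng | mm].
  rewrite ge0_integralD //; try solve [nng | mm].
  rewrite ge0_integralD //; try solve [nng | mm].
  rewrite ge0_integralZl_EFin //; try solve [nng | mm].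
  rewrite ge0_integralD //; try solve [nng | mm].
  by rewrite -!integral_mkcond.
set P := prob_abs_ge pY A.
set JO := (\int[lebesgue_measure]_(x in O) (pY x)%:E)%E.
set L1 := L1norm d.
set H := (\int[lebesgue_measure]_(x in O) (h1 x)%:E)%E.
set L2 := L2norm_sq d.
set J2 := (\int[lebesgue_measure]_(x in I) (h2 x)%:E)%E.
set S := sup_inv_on pY A.
set E := E_abs_ln_pow pX pY s.
have L2e : L2 = (\int[lebesgue_measure]_x ((d x) ^+ 2)%:E)%E.
  by rewrite /L2 /L2norm_sq; apply: eq_integral => x _; rewrite real_normK // num_real.
have mQ : measurable [set x : R | A <= `|x|].
  rewrite (_ : [set x | _] = ~` `]- A, A[%classic); first by apply: measurableC; exact: measurable_itv.
  apply/seteqP; split => x /=.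
    by rewrite in_itv /= -ltr_norml => h; apply/negP; rewrite -leNgt.
  by rewrite in_itv /= -ltr_norml => /negP; rewrite -leNgt.
have OQ : O `<=` [set x : R | A <= `|x|].
  move=> x; rewrite /O /I /= in_itv /= -ler_norml => /negP.
  by rewrite -ltNge => /ltW.
have JOle : (JO <= P)%E.
  apply: ge0_subset_integral => //; first by apply: measurable_funTS; exact: mE.
  by move=> x _; rewrite lee_fin.
have JOge0 : (0 <= JO)%E by apply: integral_ge0 => x _; rewrite lee_fin.
have L1ge0 : (0 <= L1)%E by apply: integral_ge0 => x _; rewrite lee_fin.
have L2ge0 : (0 <= L2)%E by apply: integral_ge0 => x _; rewrite lee_fin.
have inI x : I x -> (((pY x)^-1)%:E <= S)%E.
  by move=> Ix; apply: ereal_sup_ubound; exists x.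
have S0 : (0 <= S)%E.
  apply: le_trans (inI 0 _); first by rewrite lee_fin invr_ge0.
  by rewrite /I /= in_itv /= oppr_le0 ltW.
have s0 : 0 < s by lra.
have si0 : 0 < s^-1 by rewrite invr_gt0.
have si1 : s^-1 < 1 by rewrite invf_lt1.
set r := 1 - s^-1.
have r0 : 0 < r by rewrite /r subr_gt0.
set q := r^-1.
have q0 : 0 < q by rewrite /q invr_gt0.
have sq : s^-1 + q^-1 = 1 by rewrite /q invrK /r addrC subrK.
set F := fun x => pX x `^ s^-1 * `|ln (pY x)|.
set G := fun x => pX x `^ r * (\1_O x : R).
have mF : measurable_fun setT F.
  rewrite /F; apply: measurable_funM.
    exact: (measurableT_comp (measurable_powR _) mf).
  by apply: measurableT_comp mlng; exact: normr_measurable.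
have mG : measurable_fun setT G.
  rewrite /G; apply: measurable_funM; last exact: measurable_indic mO.
  exact: (measurableT_comp (measurable_powR _) mf).
have hh := hoelder lebesgue_measure mF mG s0 q0 sq.
have FG : H = 'N[lebesgue_measure]_1[EFin \o (F \* G)%R]%E.
  rewrite Lnorm1 /H [LHS]integral_mkcond; apply: eq_integral => x _.
  rewrite patchE /= /F /G indicE; case: ifPn => xO; rewrite ?pt.
    rewrite mulr1 mulrAC -powRD; last by rewrite /r addrC subrK oner_eq0.
    by rewrite /r addrC subrK powRr1 // ger0_norm // mulr_ge0.
  by rewrite (_ : (false%:R : R) = 0) // !mulr0 normr0.
have NF : 'N[lebesgue_measure]_s%:E[EFin \o F]%E = poweR E s^-1.
  rewrite unlock /E /E_abs_ln_pow; congr poweR; apply: eq_integral => x _.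
  rewrite (_ : `|(EFin \o F) x|%E = (F x)%:E); last first.
    by rewrite /= ger0_norm // /F mulr_ge0 // powR_ge0.
  rewrite poweR_EFin /F powRM ?powR_ge0 // -powRrM mulVf ?gt_eqF // powRr1 //.
set JOf := (\int[lebesgue_measure]_(x in O) (pX x)%:E)%E.
have NG : 'N[lebesgue_measure]_q%:E[EFin \o G]%E = poweR JOf r.
  rewrite unlock /q invrK /JOf; congr poweR.
  rewrite [RHS]integral_mkcond; apply: eq_integral => x _.
  rewrite (_ : `|(EFin \o G) x|%E = (`|G x|)%:E) // poweR_EFin patchE /G indicE.
  case: ifPn => xO; rewrite ?pt /=.
    by rewrite mulr1 ger0_norm ?powR_ge0 // -powRrM /q mulfV ?gt_eqF // powRr1.
  by rewrite (_ : (false%:R : R) = 0) // mulr0 normr0 powR0 // gt_eqF.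
have JOfle : (JOf <= P + L1)%E.
  apply: (@le_trans _ _ (\int[lebesgue_measure]_(x in O) ((pY x)%:E + (`|d x|)%:E))%E).
    apply: ge0_le_integral => //.
    - by move=> x _; rewrite lee_fin.
    - by apply: measurable_funTS; exact: mE.
    - by apply: emeasurable_funD; apply: measurable_funTS; exact: mE.
    move=> x _; rewrite -EFinD lee_fin /d.
    by have := ler_norm (pX x - pY x); lra.
  rewrite ge0_integralD //; try (by move=> x _; rewrite lee_fin);
    try (by apply: measurable_funTS; exact: mE).
  apply: leeD => //.
  apply: ge0_subset_integral => //; first exact: mE.
have Hle : (H <= poweR E s^-1 * poweR (P + L1) r)%E.
  rewrite FG; apply: le_trans hh _; rewrite NF NG.
  apply: lee_wpmul2l; first exact: poweR_ge0.
  apply: gt0_ler_poweR => //; first exact: ltW.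
  - by rewrite in_itv /= leey andbT; apply: integral_ge0 => x _; rewrite lee_fin.
  - rewrite in_itv /= leey andbT adde_ge0 //.
    by apply: integral_ge0 => x _; rewrite lee_fin.
have J2le : (J2 <= S * L2)%E.
  apply: (@le_trans _ _ (\int[lebesgue_measure]_(x in I) (S * ((d x)^+2)%:E))%E).
    apply: ge0_le_integral => //.
    - by move=> x _; rewrite lee_fin.
    - by apply: measurable_funTS; exact: mE.
    - by apply: measurable_funeM; apply: measurable_funTS; exact: mE.
    move=> x Ix; rewrite /h2 mulrC EFinM; apply: lee_wpmul2r; last exact: inI.
    by rewrite lee_fin sqr_ge0.
  rewrite ge0_integralZl //.
  - apply: lee_wpmul2l => //; rewrite L2e.
    apply: ge0_subset_integral => //; first exact: mE.
    by move=> x _; rewrite lee_fin sqr_ge0.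
  - by apply: measurable_funTS; exact: mE.
  - by move=> x _; rewrite lee_fin sqr_ge0.
apply: le_trans step1 _; rewrite eB -L2e -addeA.
apply: leeD.
  apply: leeD; last exact: Hle.
  apply: lee_wpmul2l; first by rewrite lee_fin.
  exact: leeD2r JOle.
rewrite ge0_muleDl // mul1e; exact: leeD2l.
Qed.
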